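(* Let $R$ be a commutative ring and $M$ a $w$-FP-projective $R$-module such that $\mathrm{Ext}^1_R(M,G)=0$ for every $GV$-torsion-free $R$-module $G$. Then $M$ is projective.
   Context: A $GV$-ideal of $R$ is a finitely generated ideal $J$ such that the natural map $R\to\mathrm{Hom}_R(J,R)$ is an isomorphism; $GV(R)$ is the set of $GV$-ideals. For an $R$-module $X$, $\mathrm{tor}_{GV}(X)=\{x\in X: Jx=0\text{ for some }J\in GV(R)\}$; $X$ is $GV$-torsion if $\mathrm{tor}_{GV}(X)=X$ and $GV$-torsion-free if $\mathrm{tor}_{GV}(X)=0$. An $R$-module $A$ is absolutely $w$-pure if $\mathrm{Ext}^1_R(N,A)$ is $GV$-torsion for every finitely presented $R$-module $N$. An $R$-module $M$ is $w$-FP-projective if $\mathrm{Ext}^1_R(M,A)=0$ for every absolutely $w$-pure $R$-module $A$. *)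

(* Defs.v *)
From HB Require Import structures.
From mathcomp Require Import all_boot all_order all_algebra.
Set Implicit Arguments. Unset Strict Implicit. Unset Printing Implicit Defensive.
Import GRing.Theory.
Local Open Scope ring_scope.

Section WDefs.
Variable R : comPzRingType.

Definition ideal_span (s : seq R) (x : R) : Prop :=
  exists c : 'I_(size s) -> R, x = \sum_(i < size s) c i * s`_i.

(* GV-ideal: finitely generated ideal J such that the natural map
   R -> Hom_R(J,R), r |-> (x |-> r x), is bijective.  Hom_R(J,R) is
   represented by functions R -> R that are R-linear on J. *)
Definition isGV (J : R -> Prop) : Prop :=
  exists s : seq R,
    (forall x, J x <-> ideal_span s x) /\
    (forall r, (forall x, J x -> r * x = 0) -> r = 0) /\
    (forall phi : R -> R,
       (forall a x y, J x -> J y -> phi (a * x + y) = a * phi x + phi y) ->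
       exists r, forall x, J x -> phi x = r * x).

Definition GV_torsion_elt (X : lmodType R) (x : X) : Prop :=
  exists J, isGV J /\ forall r, J r -> r *: x = 0.

Definition GV_torsion_free (X : lmodType R) : Prop :=
  forall x : X, GV_torsion_elt x -> x = 0.

Definition ses (A E N : lmodType R) (i : {linear A -> E}) (p : {linear E -> N}) : Prop :=
  injective i /\ (forall n, exists e, p e = n) /\
  (forall e, p e = 0 <-> exists a, i a = e).

(* Ext^1_R(N,A) = 0 (Yoneda): every extension of N by A splits. *)
Definition Ext1_zero (N A : lmodType R) : Prop :=
  forall (E : lmodType R) (i : {linear A -> E}) (p : {linear E -> N}),
    ses i p -> exists s : {linear N -> E}, forall n, p (s n) = n.

(* Ext^1_R(N,A) is GV-torsion (Yoneda): for each extension class xi there is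
   J in GV(R) with r xi = 0 for all r in J; r xi is the pullback of xi along
   multiplication by r on N, which splits iff r id_N lifts to E. *)
Definition Ext1_GV_torsion (N A : lmodType R) : Prop :=
  forall (E : lmodType R) (i : {linear A -> E}) (p : {linear E -> N}),
    ses i p ->
    exists J, isGV J /\
      forall r, J r -> exists s : {linear N -> E}, forall n, p (s n) = r *: n.

Definition finitely_presented (N : lmodType R) : Prop :=
  exists (n : nat) (f : {linear 'rV[R]_n -> N}) (gens : seq 'rV[R]_n),
    (forall x, exists v, f v = x) /\
    (forall v, f v = 0 <->
       exists c : 'I_(size gens) -> R, v = \sum_(i < size gens) c i *: gens`_i).

Definition absolutely_w_pure (A : lmodType R) : Prop :=
  forall N : lmodType R, finitely_presented N -> Ext1_GV_torsion N A.

Definition w_FP_projective (M : lmodType R) : Prop :=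
  forall A : lmodType R, absolutely_w_pure A -> Ext1_zero M A.

Definition projective_module (M : lmodType R) : Prop :=
  forall (B C : lmodType R) (g : {linear B -> C}) (f : {linear M -> C}),
    (forall c, exists b, g b = c) ->
    exists h : {linear M -> B}, forall m, g (h m) = f m.

End WDefs.

(* Main.v *)
Require Import Defs.
From HB Require Import structures.
From mathcomp Require Import all_boot all_order all_algebra.
From mathcomp Require Import boolp.
Set Warnings "-notation-overridden -redundant-canonical-projection -ambiguous-paths".
Set Implicit Arguments. Unset Strict Implicit. Unset Printing Implicit Defensive.
Import GRing.Theory.
Local Open Scope ring_scope.

Definition mkLin (R : pzRingType) (U V : lmodType R) (f : U -> V) (H : linear f)
  : {linear U -> V} := HB.pack f (GRing.isLinear.Build R U V *:%R f H).

Lemma mkLinE (R : pzRingType) (U V : lmodType R) (f : U -> V) (H : linear f) x :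
  mkLin H x = f x.
Proof. by []. Qed.

Record spred (R : pzRingType) (V : lmodType R) := SPred {
  sp : V -> Prop;
  sp0 : sp 0;
  splin : forall a x y, sp x -> sp y -> sp (a *: x + y) }.

Section SubMod.
Variables (R : pzRingType) (V : lmodType R) (S : spred V).
Local Notation P := (sp S).
Let P0 : P 0 := sp0 S.
Let Plin : forall a x y, P x -> P y -> P (a *: x + y) := @splin _ _ S.

Definition subm : Type := {x : V | sp S x}.
HB.instance Definition _ := gen_eqMixin subm.
HB.instance Definition _ := gen_choiceMixin subm.

Lemma subm_inj (x y : subm) : proj1_sig x = proj1_sig y -> x = y.
Proof.
case: x y => [x px] [y py] /= exy; subst y.
by rewrite (Prop_irrelevance px py).
Qed.

Lemma P_add x y : P x -> P y -> P (x + y).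
Proof. by move=> px py; have := Plin 1 px py; rewrite scale1r. Qed.
Lemma P_scale a x : P x -> P (a *: x).
Proof. by move=> px; have := Plin a px P0; rewrite addr0. Qed.
Lemma P_opp x : P x -> P (- x).
Proof. by move=> px; have := P_scale (-1) px; rewrite scaleN1r. Qed.

Definition subm0 : subm := exist _ 0 P0.
Definition submD (x y : subm) : subm :=
  exist _ (proj1_sig x + proj1_sig y) (P_add (proj2_sig x) (proj2_sig y)).
Definition submN (x : subm) : subm := exist _ (- proj1_sig x) (P_opp (proj2_sig x)).
Definition submZ a (x : subm) : subm := exist _ (a *: proj1_sig x) (P_scale a (proj2_sig x)).

Fact submA : associative submD.
Proof. by move=> x y z; apply: subm_inj; rewrite /= addrA. Qed.
Fact submC : commutative submD.
Proof. by move=> x y; apply: subm_inj; rewrite /= addrC. Qed.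
Fact subm0r : left_id subm0 submD.
Proof. by move=> x; apply: subm_inj; rewrite /= add0r. Qed.
Fact submNr : left_inverse subm0 submN submD.
Proof. by move=> x; apply: subm_inj; rewrite /= addNr. Qed.
HB.instance Definition _ := GRing.isZmodule.Build subm submA submC subm0r submNr.
Fact submZA a b v : submZ a (submZ b v) = submZ (a * b) v.
Proof. by apply: subm_inj; rewrite /= scalerA. Qed.
Fact submZ1 : left_id 1 submZ.
Proof. by move=> x; apply: subm_inj; rewrite /= scale1r. Qed.
Fact submZDr : right_distributive submZ +%R.
Proof. by move=> a x y; apply: subm_inj; rewrite /= scalerDr. Qed.
Fact submZDl v : {morph submZ^~ v: a b / a + b}.
Proof. by move=> a b; apply: subm_inj; rewrite /= scalerDl. Qed.
HB.instance Definition _ := GRing.Zmodule_isLmodule.Build R subm submZA submZ1 submZDr submZDl.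

Lemma subm_val_lin : linear (fun x : subm => proj1_sig x).
Proof. by []. Qed.
Definition submval : {linear subm -> V} := mkLin subm_val_lin.
Lemma submvalE x : submval x = proj1_sig x. Proof. by []. Qed.
Lemma submval_inj : injective submval.
Proof. by move=> x y; exact: subm_inj. Qed.
End SubMod.

Section QuotMod.
Variables (R : pzRingType) (V : lmodType R) (S : spred V).
Local Notation P := (sp S).

Definition qcls (x : V) : V -> Prop := fun y => sp S (y - x).
Definition quotm : Type := {C : V -> Prop | exists x, C = qcls x}.
HB.instance Definition _ := gen_eqMixin quotm.
HB.instance Definition _ := gen_choiceMixin quotm.

Definition qproj (x : V) : quotm := exist _ (qcls x) (ex_intro _ x erefl).
Definition qrep (q : quotm) : V := projT1 (cid (proj2_sig q)).

Lemma quotm_inj (p q : quotm) : proj1_sig p = proj1_sig q -> p = q.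
Proof.
case: p q => [x px] [y py] /= exy; subst y.
by rewrite (Prop_irrelevance px py).
Qed.

Lemma qproj_eq x y : P (x - y) -> qproj x = qproj y.
Proof.
move=> pxy; apply: quotm_inj => /=.
apply: funext => z; apply: propext; rewrite /qcls; split => h.
  have -> : z - y = (z - x) + (x - y) by rewrite addrA subrK.
  exact: (P_add (S:=S)) h pxy.
have -> : z - x = (z - y) - (x - y) by rewrite opprB addrA subrK.
exact: (P_add (S:=S)) h (P_opp (S:=S) pxy).
Qed.

Lemma qproj_eqP x y : qproj x = qproj y -> P (x - y).
Proof.
move=> e; have : qcls x = qcls y by move: e; rewrite /qproj => -[].
move=> /(congr1 (fun C => C x)); rewrite /qcls subrr => h.
by rewrite -h; apply: sp0.
Qed.

Lemma qrepK q : qproj (qrep q) = q.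
Proof.
rewrite /qrep; case: cid => x /= e.
by apply: quotm_inj => /=.
Qed.

Lemma qproj_surj q : exists x, q = qproj x.
Proof. by exists (qrep q); rewrite qrepK. Qed.

Lemma qrepP x : P (qrep (qproj x) - x).
Proof. by apply: qproj_eqP; rewrite qrepK. Qed.

Definition q0 : quotm := qproj 0.
Definition qD (p q : quotm) : quotm := qproj (qrep p + qrep q).
Definition qN (q : quotm) : quotm := qproj (- qrep q).
Definition qZ a (q : quotm) : quotm := qproj (a *: qrep q).

Lemma qDE x y : qD (qproj x) (qproj y) = qproj (x + y).
Proof.
apply: qproj_eq.
have -> : qrep (qproj x) + qrep (qproj y) - (x + y)
  = (qrep (qproj x) - x) + (qrep (qproj y) - y).
  by rewrite opprD addrACA.
exact: (P_add (S:=S)) (qrepP x) (qrepP y).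
Qed.
Lemma qNE x : qN (qproj x) = qproj (- x).
Proof.
apply: qproj_eq; rewrite -opprD; apply: (P_opp (S:=S)); exact: (qrepP x).
Qed.
Lemma qZE a x : qZ a (qproj x) = qproj (a *: x).
Proof.
apply: qproj_eq; rewrite -scalerBr; apply: (P_scale (S:=S)); exact: (qrepP x).
Qed.

Fact qA : associative qD.
Proof.
move=> p q r; case: (qproj_surj p) => x ->; case: (qproj_surj q) => y ->.
by case: (qproj_surj r) => z ->; rewrite !qDE addrA.
Qed.
Fact qC : commutative qD.
Proof.
move=> p q; case: (qproj_surj p) => x ->; case: (qproj_surj q) => y ->.
by rewrite !qDE addrC.
Qed.
Fact q0r : left_id q0 qD.
Proof. by move=> p; case: (qproj_surj p) => x ->; rewrite /q0 qDE add0r. Qed.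
Fact qNr : left_inverse q0 qN qD.
Proof. by move=> p; case: (qproj_surj p) => x ->; rewrite qNE qDE addNr. Qed.
HB.instance Definition _ := GRing.isZmodule.Build quotm qA qC q0r qNr.
Fact qZA a b v : qZ a (qZ b v) = qZ (a * b) v.
Proof. by case: (qproj_surj v) => x ->; rewrite !qZE scalerA. Qed.
Fact qZ1 : left_id 1 qZ.
Proof. by move=> v; case: (qproj_surj v) => x ->; rewrite !qZE scale1r. Qed.
Fact qZDr : right_distributive qZ +%R.
Proof.
move=> a p q; case: (qproj_surj p) => x ->; case: (qproj_surj q) => y ->.
change (qZ a (qD (qproj x) (qproj y)) = qD (qZ a (qproj x)) (qZ a (qproj y))).
by rewrite [qD (qproj x) _]qDE !qZE qDE scalerDr.
Qed.
Fact qZDl v : {morph qZ^~ v: a b / a + b}.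
Proof.
move=> a b; case: (qproj_surj v) => x ->.
change (qZ (a + b) (qproj x) = qD (qZ a (qproj x)) (qZ b (qproj x))).
by rewrite !qZE qDE scalerDl.
Qed.
HB.instance Definition _ := GRing.Zmodule_isLmodule.Build R quotm qZA qZ1 qZDr qZDl.

Lemma qproj_lin : linear qproj.
Proof. by move=> a x y; change (qproj (a *: x + y) = qD (qZ a (qproj x)) (qproj y)); rewrite qZE qDE. Qed.
Definition qprojL : {linear V -> quotm} := mkLin qproj_lin.
Lemma qprojLE x : qprojL x = qproj x. Proof. by []. Qed.

Lemma qproj0 x : qproj x = 0 <-> P x.
Proof.
split; first by move=> /qproj_eqP; rewrite subr0.
by move=> px; apply: qproj_eq; rewrite subr0.
Qed.

Section Lift.
Variables (W : lmodType R) (h : {linear V -> W}).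
Hypothesis hP : forall x, P x -> h x = 0.
Definition qlift_fun (q : quotm) : W := h (qrep q).
Lemma qliftE x : qlift_fun (qproj x) = h x.
Proof.
by apply/eqP; rewrite -subr_eq0 /qlift_fun -linearB hP //; exact: qrepP.
Qed.
Lemma qlift_lin : linear qlift_fun.
Proof.
move=> a p q; case: (qproj_surj p) => x ->; case: (qproj_surj q) => y ->.
change (qlift_fun (qD (qZ a (qproj x)) (qproj y)) = a *: qlift_fun (qproj x) + qlift_fun (qproj y)).
by rewrite qZE qDE !qliftE linearD linearZ.
Qed.
Definition qlift : {linear quotm -> W} := mkLin qlift_lin.
Lemma qliftLE x : qlift (qproj x) = h x. Proof. exact: qliftE. Qed.
End Lift.
End QuotMod.

Lemma qprojZ (R : pzRingType) (V : lmodType R) (S : spred V) (a : R) (x : V) :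
  a *: qproj S x = qproj S (a *: x).
Proof. exact: qZE. Qed.
Lemma qprojD (R : pzRingType) (V : lmodType R) (S : spred V) (x y : V) :
  qproj S x + qproj S y = qproj S (x + y).
Proof. exact: qDE. Qed.

Section Ideals.
Variable R : comPzRingType.

Lemma span0 (s : seq R) : ideal_span s 0.
Proof. by exists (fun _ => 0); rewrite big1 // => i _; rewrite mul0r. Qed.

Lemma span_lin (s : seq R) a x y :
  ideal_span s x -> ideal_span s y -> ideal_span s (a * x + y).
Proof.
move=> [c ->] [d ->]; exists (fun i => a * c i + d i).
rewrite mulr_sumr -big_split /=; apply: eq_bigr => i _.
by rewrite mulrDl mulrA.
Qed.

Lemma span_nth (s : seq R) (i : 'I_(size s)) : ideal_span s s`_i.
Proof.
exists (fun j => (j == i)%:R).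
rewrite (bigD1 i) //= eqxx mul1r big1 ?addr0 // => j /negbTE ->.
by rewrite mul0r.
Qed.

Lemma span_mem (s : seq R) u : u \in s -> ideal_span s u.
Proof.
move=> us; have hi : (index u s < size s)%N by rewrite index_mem.
by have := span_nth (Ordinal hi); rewrite /= nth_index.
Qed.

Lemma span_ind (s : seq R) (Q : R -> Prop) :
  Q 0 -> (forall a x y, Q x -> Q y -> Q (a * x + y)) ->
  (forall u, u \in s -> Q u) -> forall x, ideal_span s x -> Q x.
Proof.
move=> Q0 Ql Qs x [c ->].
apply: (big_ind Q) => //.
  by move=> y z Qy Qz; have := Ql 1 y z Qy Qz; rewrite mul1r.
move=> i _; have := Ql (c i) _ 0 (Qs _ (mem_nth 0 (ltn_ord i))) Q0.
by rewrite addr0.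
Qed.

Lemma GV_ideal (J : R -> Prop) : isGV J ->
  J 0 /\ (forall a x y, J x -> J y -> J (a * x + y)).
Proof.
move=> [s [Js _]]; split; first by apply/Js/span0.
by move=> a x y /Js jx /Js jy; apply/Js/span_lin.
Qed.

Lemma GV_top : isGV (fun _ : R => True).
Proof.
exists [:: 1]; split; [|split].
- move=> x; split=> // _; exists (fun _ => x).
  by rewrite big_ord1 /= mulr1.
- by move=> r /(_ 1 I); rewrite mulr1.
- move=> phi lin; exists (phi 1) => x _.
  have h0 : phi 0 = 0.
    have := lin 1 0 0 I I; rewrite !mul1r addr0.
    by move/(congr1 (fun z => z - phi 0)); rewrite subrr addrK => <-.
  by have := lin x 1 0 I I; rewrite mulr1 addr0 h0 addr0 mulrC.
Qed.


Definition closedQ (Q : R -> Prop) := forall a x y, Q x -> Q y -> Q (a * x + y).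

Lemma phi0_of (J : R -> Prop) (phi : R -> R) : J 0 ->
  (forall a x y, J x -> J y -> phi (a * x + y) = a * phi x + phi y) -> phi 0 = 0.
Proof.
move=> J0 lin; have := lin 1 0 0 J0 J0; rewrite !mul1r addr0.
by move/(congr1 (fun z => z - phi 0)); rewrite subrr addrK => <-.
Qed.

Lemma GV_mul (J1 J2 : R -> Prop) : isGV J1 -> isGV J2 ->
  exists J, isGV J /\ (forall a b, J1 a -> J2 b -> J (a * b)) /\
    (forall Q, Q 0 -> closedQ Q -> (forall a b, J1 a -> J2 b -> Q (a * b)) ->
       forall x, J x -> Q x).
Proof.
move=> G1 G2; have [J10 J1l] := GV_ideal G1; have [J20 J2l] := GV_ideal G2.
case: G1 => s [J1s [ann1 ext1]]; case: G2 => t [J2t [ann2 ext2]].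
pose st := [seq a * b | a <- s, b <- t].
pose J := ideal_span st.
have Jind : forall Q, Q 0 -> closedQ Q -> (forall a b, J1 a -> J2 b -> Q (a * b)) ->
       forall x, J x -> Q x.
  move=> Q Q0 Ql Qab; apply: span_ind => // u /allpairsP [[a b] /= [as_ bt ->]].
  by apply: Qab; [apply/J1s/span_mem | apply/J2t/span_mem].
have J0 : J 0 by apply: span0.
have Jl : closedQ J by move=> a x y; apply: span_lin.
have Jab : forall a b, J1 a -> J2 b -> J (a * b).
  move=> a b /J1s ha /J2t hb; move: a ha b hb.
  apply: (span_ind (Q := fun a => forall b, ideal_span t b -> J (a * b))).
  - by move=> b _; rewrite mul0r.
  - move=> c x y hx hy b hb; rewrite mulrDl -mulrA.
    by apply: Jl; [apply: hx | apply: hy].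
  - move=> u us; apply: span_ind.
    + by rewrite mulr0.
    + by move=> c x y hx hy; rewrite mulrDr mulrCA; apply: Jl.
    + by move=> v vt; apply: span_mem; apply/allpairsP; exists (u, v).
exists J; split; last by split.
exists st; split; first by [].
split.
  move=> r hr; apply: ann1 => a ha; apply: ann2 => b hb.
  by rewrite -mulrA; apply: hr; apply: Jab.
move=> phi lin.
have phi0 : phi 0 = 0 by apply: (phi0_of J0 lin).
have : forall a, exists r, J1 a -> forall y, J2 y -> phi (a * y) = r * y.
  move=> a; case: (pselect (J1 a)) => [ha|hna]; last by exists 0.
  have [r hr] : exists r, forall y, J2 y -> phi (a * y) = r * y.
    apply: ext2 => c x y hx hy.
    by rewrite mulrDr mulrCA lin //; apply: Jab.
  by exists r.
case/choice => ra hra.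
have ralin : forall c x y, J1 x -> J1 y -> ra (c * x + y) = c * ra x + ra y.
  move=> c x y hx hy; apply/eqP; rewrite -subr_eq0; apply/eqP.
  apply: ann2 => z hz.
  rewrite mulrBl mulrDl -hra; last by [] ; last by apply: J1l.
  rewrite -mulrA -!hra // mulrDl -mulrA lin; try by apply: Jab.
  by rewrite subrr.
have [r0 hr0] := ext1 ra ralin.
exists r0 => x hx.
suff [] : J x /\ phi x = r0 * x by [].
move: x hx; apply: Jind.
- by rewrite phi0 mulr0.
- move=> a x y [hx ex] [hy ey]; split; first by apply: Jl.
  by rewrite lin // ex ey mulrDr mulrCA.
- move=> a b ha hb; split; first by apply: Jab.
  by rewrite hra // hr0 // mulrA.
Qed.


Lemma GV_sub2 (J1 J2 : R -> Prop) : isGV J1 -> isGV J2 ->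
  exists J, isGV J /\ forall x, J x -> J1 x /\ J2 x.
Proof.
move=> G1 G2; have [J10 J1l] := GV_ideal G1; have [J20 J2l] := GV_ideal G2.
have [J [GJ [_ Jind]]] := GV_mul G1 G2.
exists J; split=> //; apply: Jind.
- by [].
- by move=> a x y [? ?] [? ?]; split; [apply: J1l | apply: J2l].
- move=> a b ha hb; split.
    by have := J1l b a 0 ha J10; rewrite addr0 mulrC.
  by have := J2l a b 0 hb J20; rewrite addr0.
Qed.

Lemma GV_fin (n : nat) (Pk : nat -> (R -> Prop) -> Prop) :
  (forall i, (i < n)%N -> exists J, isGV J /\ Pk i J) ->
  (forall i J J', Pk i J -> (forall x, J' x -> J x) -> Pk i J') ->
  exists J, isGV J /\ forall i, (i < n)%N -> Pk i J.
Proof.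
move=> hex hmono; elim: n hex => [|n IH] hex.
  by exists (fun _ => True); split; [apply: GV_top | by []].
have [J [GJ HJ]] : exists J, isGV J /\ forall i, (i < n)%N -> Pk i J.
  by apply: IH => i lt; apply: hex; apply: ltnW.
have [Jn [GJn HJn]] := hex n (ltnSn n).
have [J' [GJ' HJ']] := GV_sub2 GJ GJn.
exists J'; split=> // i; rewrite ltnS leq_eqVlt => /orP [/eqP ->|lt].
  by apply: hmono HJn _ => x /HJ' [].
by apply: hmono (HJ i lt) _ => x /HJ' [].
Qed.

End Ideals.

Section Tor.
Variables (R : comPzRingType) (K : lmodType R).

Lemma scaleC (r a : R) (x : K) : r *: (a *: x) = a *: (r *: x).
Proof. by rewrite !scalerA mulrC. Qed.

Definition tor (x : K) : Prop := GV_torsion_elt x.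

Lemma tor0 : tor 0.
Proof. by exists (fun _ => True); split; [apply: GV_top | move=> r _; rewrite scaler0]. Qed.

Lemma torlin a x y : tor x -> tor y -> tor (a *: x + y).
Proof.
move=> [J1 [G1 h1]] [J2 [G2 h2]].
have [J [GJ HJ]] := GV_sub2 G1 G2.
exists J; split=> // r /HJ [r1 r2].
by rewrite scalerDr scaleC h1 // h2 // scaler0 addr0.
Qed.

Definition torS : spred K := @SPred _ _ tor tor0 torlin.

Lemma tor_closure x : (exists J, isGV J /\ forall r, J r -> tor (r *: x)) -> tor x.
Proof.
move=> [J [GJ HJ]].
have GJ' := GJ; case: GJ' => s [Js _].
have [J' [GJ' HJ']] := @GV_fin _ (size s)
   (fun i J' => forall r, J' r -> r *: (s`_i *: x) = 0)
   ltac:(move=> i lt; have := HJ s`_i (proj2 (Js _) (span_nth (Ordinal lt)));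
          by move=> [Ji [GJi hJi]]; exists Ji)
   ltac:(by move=> i J1 J2 h sub r /sub /h).
have [J'' [GJ'' [_ Jind]]] := GV_mul GJ GJ'.
exists J''; split=> //; apply: Jind.
- by rewrite scale0r.
- by move=> a u v hu hv; rewrite scalerDl -scalerA hu hv scaler0 addr0.
- move=> a b /Js ha hb; move: a ha; apply: span_ind.
  + by rewrite mul0r scale0r.
  + by move=> c u v hu hv; rewrite mulrDl scalerDl -mulrA -scalerA hu hv scaler0 addr0.
  + move=> u us; have lt : (index u s < size s)%N by rewrite index_mem.
    have := HJ' _ lt b hb; rewrite nth_index // => h.
    by rewrite mulrC -scalerA.
Qed.

End Tor.

Section TorMods.
Variables (R : comPzRingType) (K : lmodType R).

Lemma quot_tf : GV_torsion_free (quotm (torS K)).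
Proof.
move=> q [J [GJ HJ]]; case: (qproj_surj q) => x eq; subst q.
apply/qproj0/tor_closure; exists J; split=> // r /HJ.
move=> h; apply: (proj1 (@qproj0 _ _ (torS K) (r *: x))); rewrite -qprojZ; exact: h.
Qed.


Lemma tor_elt_sub (a : subm (torS K)) : GV_torsion_elt a.
Proof.
case: a => y ty; case: (ty) => J [GJ HJ]; exists J; split=> // r Jr.
by apply: subm_inj => /=; apply: HJ.
Qed.

Lemma sub_abs_pure : absolutely_w_pure (subm (torS K)).
Proof.
move=> N [n [f [gens [fsurj fker]]]] E i p [iinj [psurj pex]].
have [ej hej] := @choice 'I_n E (fun j e => p e = f (delta_mx 0 j)) (fun j => psurj (f (delta_mx 0 j))).
have Llin : linear (fun v : 'rV[R]_n => \sum_(j < n) v 0 j *: ej j).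
  move=> a v w; rewrite scaler_sumr -big_split /=; apply: eq_bigr => j _.
  by rewrite !mxE scalerDl scalerA.
pose L := mkLin Llin.
have pL : forall v, p (L v) = f v.
  move=> v; rewrite [in RHS](row_sum_delta v) !linear_sum /=; apply: eq_bigr => j _.
  by rewrite !linearZ /= hej.
have hk : forall k, (k < size gens)%N -> exists J, isGV J /\
    (forall r, J r -> r *: L gens`_k = 0).
  move=> k lt.
  have : p (L gens`_k) = 0.
    rewrite pL; apply/fker; exists (fun i => (i == Ordinal lt)%:R).
    rewrite (bigD1 (Ordinal lt)) //= eqxx scale1r big1 ?addr0 // => j /negbTE ->.
    by rewrite scale0r.
  case/pex => a ea; case: (tor_elt_sub a) => J [GJ HJ].
  exists J; split=> // r Jr; by rewrite -ea -linearZ HJ // linear0.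
have [J [GJ HJ]] := @GV_fin _ (size gens)
   (fun k J => forall r, J r -> r *: L gens`_k = 0) hk
   ltac:(by move=> k J1 J2 h sub r /sub /h).
exists J; split=> // r Jr.
have [g hg] := @choice N _ (fun x v => f v = x) fsurj.
have slin : linear (fun x => r *: L (g x)).
  move=> a x y; apply/eqP; rewrite -subr_eq0 scaleC -scalerDr -scalerBr.
  rewrite -linearZ -linearD -linearB.
  set w := (X in L X).
  have : f w = 0 by rewrite /w !linearB linearD linearZ /= !hg subrr.
  move=> /fker [c ec]; apply/eqP; rewrite ec (linear_sum L) scaler_sumr big1 // => k _.
  by rewrite linearZ /= scalerA mulrC -scalerA HJ // scaler0.
exists (mkLin slin) => x /=.
by rewrite linearZ /= pL hg.
Qed.

End TorMods.

Section Main.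
Variables (R : comPzRingType) (M : lmodType R).
Hypothesis hFP : w_FP_projective M.
Hypothesis hTF : forall G : lmodType R, GV_torsion_free G -> Ext1_zero M G.

Lemma ext_all (K E : lmodType R) (i : {linear K -> E}) (p : {linear E -> M}) :
  ses i p -> exists s : {linear M -> E}, forall m, p (s m) = m.
Proof.
move=> [iinj [psurj pex]].
pose T := torS K.
pose pe (e : E) := exists k, tor k /\ i k = e.
have pe0 : pe 0 by exists 0; split; [apply: tor0 | rewrite linear0].
have pelin : forall a x y, pe x -> pe y -> pe (a *: x + y).
  move=> a x y [k [tk <-]] [l [tl <-]]; exists (a *: k + l); split.
    exact: torlin.
  by rewrite linearP.
pose PeS : spred E := SPred pe0 pelin.
have i1lin : linear (fun k => qproj PeS (i k)).
  by move=> a x y; rewrite linearP -qprojD -qprojZ.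
pose i1 := mkLin i1lin.
have i1T : forall x, sp T x -> i1 x = 0.
  by move=> x tx; apply/qproj0; exists x.
pose i' := qlift i1T.
have pP : forall e, sp PeS e -> p e = 0.
  by move=> e [k [tk <-]]; apply/pex; exists k.
pose p' := qlift pP.
have i'E : forall x, i' (qproj T x) = qproj PeS (i x) by move=> x; apply: qliftLE.
have p'E : forall e, p' (qproj PeS e) = p e by move=> e; apply: qliftLE.
have ses' : ses i' p'.
  split; [|split].
  - move=> u v; case: (qproj_surj u) => x ->; case: (qproj_surj v) => y ->.
    rewrite !i'E => /qproj_eqP [k [tk ek]].
    apply: qproj_eq; suff -> : x - y = k by [].
    by apply: iinj; rewrite ek linearB.
  - move=> m; case: (psurj m) => e <-; exists (qproj PeS e); exact: p'E.
  - move=> q; case: (qproj_surj q) => e ->; rewrite p'E; split.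
      by move/pex => [k <-]; exists (qproj T k); rewrite i'E.
    move=> [u]; case: (qproj_surj u) => k ->; rewrite i'E.
    move=> /qproj_eqP [l [tl el]].
    have h1 : p (i k) = 0 by apply/pex; exists k.
    have h2 : p (i l) = 0 by apply/pex; exists l.
    have -> : e = i k - i l by rewrite el opprB addrC subrK.
    by rewrite linearB h1 h2 subrr.
have [sig hsig] := hTF (@quot_tf _ K) ses'.
pose ps (e : E) := qproj PeS e = sig (p e).
have ps0 : ps 0 by rewrite /ps !linear0 -(linear0 (qprojL PeS)).
have pslin : forall a x y, ps x -> ps y -> ps (a *: x + y).
  move=> a x y hx hy; rewrite /ps -qprojD -qprojZ hx hy.
  by rewrite -linearZ -linearD -linearP.
pose Sig : spred E := SPred ps0 pslin.
have i2pf : forall t : subm T, sp Sig (i (proj1_sig t)).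
  move=> t; rewrite /= /ps.
  have -> : p (i (proj1_sig t)) = 0 by apply/pex; exists (proj1_sig t).
  rewrite linear0; apply/qproj0; exists (proj1_sig t); split=> //.
  exact: (proj2_sig t).
pose i2f (t : subm T) : subm Sig := exist _ (i (proj1_sig t)) (i2pf t).
have i2lin : linear i2f.
  by move=> a x y; apply: subm_inj => /=; rewrite linearP.
pose i2 := mkLin i2lin.
have p2lin : linear (fun z : subm Sig => p (proj1_sig z)).
  by move=> a x y /=; rewrite linearP.
pose p2 := mkLin p2lin.
have ses2 : ses i2 p2.
  split; [|split].
  - move=> u v; rewrite !mkLinE => /(congr1 (@proj1_sig _ _)) /= /iinj h. apply: (@subm_inj _ _ T). exact: h.
  - move=> m; pose e := qrep (sig m).
    have ee : qproj PeS e = sig m by rewrite /e qrepK.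
    have pe_ : p e = m by rewrite -p'E ee hsig.
    have se : sp Sig e by rewrite /= /ps pe_.
    by exists (exist _ e se).
  - move=> z; split.
      rewrite mkLinE => pz.
      have : qproj PeS (proj1_sig z) = 0.
        by rewrite (proj2_sig z) pz linear0.
      move=> /qproj0 [k [tk ek]].
      exists (exist _ k tk); apply: subm_inj; by [].
    move=> [t <-]; apply/pex; by exists (proj1_sig t).
have [tau htau] := hFP (@sub_abs_pure _ K) ses2.
have slin : linear (fun m => proj1_sig (tau m)).
  by move=> a x y; rewrite linearP.
exists (mkLin slin) => m; rewrite mkLinE.
by have := htau m; rewrite mkLinE.
Qed.

End Main.

Theorem proposition2p8 (R : comPzRingType) (M : lmodType R) :
  w_FP_projective M ->
  (forall G : lmodType R, GV_torsion_free G -> Ext1_zero M G) ->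
  projective_module M.
Proof.
move=> hFP hTF B C g f gsurj.
pose pb (z : (B * M)%type) := g z.1 = f z.2.
have pb0 : pb 0 by rewrite /pb /= !linear0.
have pblin : forall a x y, pb x -> pb y -> pb (a *: x + y).
  by move=> a [x1 x2] [y1 y2]; rewrite /pb /= !linearP => -> ->.
pose Pb : spred (B * M)%type := SPred pb0 pblin.
pose kb (b : B) := g b = 0.
have kb0 : kb 0 by rewrite /kb linear0.
have kblin : forall a x y, kb x -> kb y -> kb (a *: x + y).
  by move=> a x y; rewrite /kb linearP => -> ->; rewrite scaler0 addr0.
pose Kb : spred B := SPred kb0 kblin.
have ipf : forall k : subm Kb, sp Pb (proj1_sig k, 0).
  by move=> k; rewrite /= /pb /= linear0; exact: (proj2_sig k).
pose if_ (k : subm Kb) : subm Pb := exist _ (proj1_sig k, 0) (ipf k).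
have ilin : linear if_.
  move=> a x y; apply: subm_inj => /=.
  have -> : a *: ((sval x, 0) : (B * M)%type) + (sval y, 0) = (a *: sval x + sval y, a *: 0 + 0) by [].
  by rewrite scaler0 addr0.
have plin : linear (fun z : subm Pb => (proj1_sig z).2).
  by [].
have sesb : ses (mkLin ilin) (mkLin plin).
  split; [|split].
  - move=> u v; rewrite !mkLinE => /(congr1 (fun z : subm Pb => (proj1_sig z).1)) /= h.
    by apply: (@subm_inj _ _ Kb).
  - move=> m; case: (gsurj (f m)) => b gb.
    have pbm : sp Pb (b, m) by [].
    by exists (exist _ (b, m) pbm).
  - move=> z; rewrite mkLinE; split.
      case: z => [[b m] hz] /= m0; subst m.
      have kbb : sp Kb b by rewrite /= /kb hz linear0.
      by exists (exist _ b kbb); apply: subm_inj.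
    by move=> [k <-].
have [s hs] := ext_all hFP hTF sesb.
have hlin : linear (fun m => (proj1_sig (s m)).1).
  by move=> a x y; rewrite linearP.
exists (mkLin hlin) => m; rewrite mkLinE.
have := hs m; rewrite mkLinE => e.
by rewrite (proj2_sig (s m)) /= e.
Qed.
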